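(* Let $P=(p_1,\dots,p_n)$ be points in $\mathbb{R}^d$, $k\ge1$, and $\mathcal{F}$ a constraint for $k$-CMeans. Let $\lambda\ge1$ and let $\mathcal{C}=\{c_1,\dots,c_k\}\subset\mathbb{R}^d$ be the centers of a $\lambda$-approximate solution of the ordinary (unconstrained) $k$-means problem on $P$. Then the Cartesian product $[\mathcal{C}]^k=\mathcal{C}\times\cdots\times\mathcal{C}$ ($k$ factors) contains a $k$-tuple $(q_1,\dots,q_k)$ for which there is $(S_1,\dots,S_k)\in\mathcal{F}$ with $\frac1n\sum_{j=1}^k\sum_{i\in S_j}\|p_i-q_j\|^2\le(18\lambda+16)\,\delta^2_{opt}$.
   Context: A constraint for $k$-CMeans is a nonempty family $\mathcal{F}$ of ordered partitions $(S_1,\dots,S_k)$ of the index set $\{1,\dots,n\}$ into $k$ parts; $\delta^2_{opt}=\min_{(S_j)\in\mathcal{F}}\min_{c'_1,\dots,c'_k\in\mathbb{R}^d}\frac1n\sum_j\sum_{i\in S_j}\|p_i-c'_j\|^2$. The unconstrained $k$-means cost of a set $\mathcal{C}$ of $k$ points is $\omega=\frac1n\sum_{i=1}^n\min_{c\in\mathcal{C}}\|p_i-c\|^2$; $\mathcal{C}$ is a $\lambda$-approximate solution if $\omega\le\lambda\cdot\min_{|\mathcal{C}'|= k}\frac1n\sum_i\min_{c\in\mathcal{C}'}\|p_i-c\|^2$. *)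

(* Defs.v *)
From HB Require Import structures.
From mathcomp Require Import all_boot all_order all_algebra.
From mathcomp Require Import classical_sets reals.
Set Implicit Arguments. Unset Strict Implicit. Unset Printing Implicit Defensive.
Import Order.TTheory GRing.Theory Num.Theory.
Local Open Scope ring_scope.
Local Open Scope classical_set_scope.

Section KMeans.
Variables (R : realType) (d n k : nat).

Definition sqnorm (v : 'rV[R]_d) : R := \sum_(l < d) (v ord0 l) ^+ 2.

Definition cluster_cost (p : 'I_n -> 'rV[R]_d)
  (S : {ffun 'I_k -> {set 'I_n}}) (q : 'I_k -> 'rV[R]_d) : R :=
  n%:R^-1 * \sum_(j < k) \sum_(i in S j) sqnorm (p i - q j).

(* ordered partition (S_1,...,S_k) of {1..n} into k (possibly empty) parts *)
Definition is_ordered_partition (S : {ffun 'I_k -> {set 'I_n}}) : Prop :=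
  (forall j j' : 'I_k, j != j' -> (S j :&: S j' == finset.set0)) /\
  (forall i : 'I_n, exists j : 'I_k, i \in S j).

Definition is_constraint (F : {set {ffun 'I_k -> {set 'I_n}}}) : Prop :=
  F != finset.set0 /\ (forall S, S \in F -> is_ordered_partition S).

Definition delta2_opt (p : 'I_n -> 'rV[R]_d)
  (F : {set {ffun 'I_k -> {set 'I_n}}}) : R :=
  inf [set x | exists S c', S \in F /\ x = cluster_cost p S c'].

Definition kmeans_cost (p : 'I_n -> 'rV[R]_d) (c : 'I_k -> 'rV[R]_d) : R :=
  n%:R^-1 * \sum_(i < n) inf [set sqnorm (p i - c m) | m in [set: 'I_k]].

Definition opt_kmeans (p : 'I_n -> 'rV[R]_d) : R :=
  inf [set kmeans_cost p c' | c' in [set c' : 'I_k -> 'rV[R]_d | injective c']].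

Definition is_approx_solution (lam : R) (p : 'I_n -> 'rV[R]_d)
  (c : 'I_k -> 'rV[R]_d) : Prop :=
  injective c /\ kmeans_cost p c <= lam * opt_kmeans p.

End KMeans.

(* Main.v *)
Require Import Defs.
From HB Require Import structures.
From mathcomp Require Import all_boot all_order all_algebra.
From mathcomp Require Import classical_sets reals.
From mathcomp Require Import ring lra zify.
Import Order.TTheory GRing.Theory Num.Theory.
Local Open Scope ring_scope.
Local Open Scope classical_set_scope.

Section Helpers.
Variables (R : realType) (d n k : nat).

Lemma sqnorm_ge0 (v : 'rV[R]_d) : 0 <= sqnorm v.
Proof. by apply: sumr_ge0 => l _; apply: sqr_ge0. Qed.

Lemma sqnorm_add (u v : 'rV[R]_d) :
  sqnorm (u + v) <= 2 * sqnorm u + 2 * sqnorm v.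
Proof.
rewrite /sqnorm !mulr_sumr -big_split /=; apply: ler_sum => l _.
rewrite mxE; set a := u ord0 l; set b := v ord0 l.
have : 0 <= (a - b) ^+ 2 by apply: sqr_ge0.
by move=> h; nra.
Qed.

Lemma sqnormB_sym (u v : 'rV[R]_d) : sqnorm (u - v) = sqnorm (v - u).
Proof. by rewrite -opprB /sqnorm; apply: eq_bigr => l _; rewrite mxE sqrrN. Qed.

Lemma fin_argmin (I : finType) (P : pred I) (i0 : I) (f : I -> R) :
  P i0 -> exists i, P i /\ forall j, P j -> f i <= f j.
Proof.
move=> Pi0; case: (@arg_minP _ R I i0 P f Pi0) => i Pi h.
by exists i; split.
Qed.

Lemma inf_fin (f : 'I_k -> R) : (0 < k)%N ->
  exists m, inf [set f m | m in setT] = f m /\ forall m', f m <= f m'.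
Proof.
move=> kp; have [m [_ hm]] := @fin_argmin _ predT (Ordinal kp) f isT.
exists m; split; last by move=> m'; apply: hm.
apply/le_anti/andP; split.
  apply: ge_inf; last by exists m.
  by exists (f m) => _ [x _ <-]; apply: hm.
by apply: lb_le_inf; [exists (f m); exists m | move=> _ [x _ <-]; apply: hm].
Qed.

Lemma partition_sum (S : {ffun 'I_k -> {set 'I_n}}) (h : 'I_n -> R) :
  is_ordered_partition S ->
  \sum_(j < k) \sum_(i in S j) h i = \sum_(i < n) h i.
Proof.
move=> [disj cov].
rewrite (eq_bigr (fun j => \sum_(i < n) (if i \in S j then h i else 0)));
  last by move=> j _; rewrite big_mkcond.
rewrite exchange_big /=; apply: eq_bigr => i _.
have [j0 hj0] := cov i.
rewrite (bigD1 j0) //= hj0 big1 ?addr0 // => j hj.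
case: ifP => // hij; move: (disj j0 j); rewrite eq_sym hj => /(_ isT) /eqP.
by move/setP/(_ i); rewrite inE hj0 hij inE.
Qed.


Lemma kmeans_le_cluster (p : 'I_n -> 'rV[R]_d) S (c' : 'I_k -> 'rV[R]_d) :
  (0 < k)%N -> is_ordered_partition S -> kmeans_cost p c' <= cluster_cost p S c'.
Proof.
move=> kp hS; rewrite /kmeans_cost /cluster_cost; apply: ler_wpM2l.
  by rewrite invr_ge0 ler0n.
rewrite -(partition_sum _ _ hS); apply: ler_sum => j _; apply: ler_sum => i _.
by have [m [-> hm]] := inf_fin (fun m => sqnorm (p i - c' m)) kp; apply: hm.
Qed.

Lemma kmeans_mono (p : 'I_n -> 'rV[R]_d) (c' c'' : 'I_k -> 'rV[R]_d) :
  (0 < k)%N -> (forall m, exists m'', c'' m'' = c' m) ->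
  kmeans_cost p c'' <= kmeans_cost p c'.
Proof.
move=> kp hc; rewrite /kmeans_cost; apply: ler_wpM2l; first by rewrite invr_ge0 ler0n.
apply: ler_sum => i _.
have [m [-> hm]] := inf_fin (fun m => sqnorm (p i - c' m)) kp.
have [m'' [-> hm'']] := inf_fin (fun m => sqnorm (p i - c'' m)) kp.
by have [m1 <-] := hc m; apply: hm''.
Qed.

Lemma kmeans_ge0 (p : 'I_n -> 'rV[R]_d) (c' : 'I_k -> 'rV[R]_d) :
  (0 < k)%N -> 0 <= kmeans_cost p c'.
Proof.
move=> kp; rewrite /kmeans_cost mulr_ge0 ?invr_ge0 ?ler0n //.
apply: sumr_ge0 => i _.
by have [m [-> _]] := inf_fin (fun m => sqnorm (p i - c' m)) kp; apply: sqnorm_ge0.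
Qed.

Lemma opt_le (p : 'I_n -> 'rV[R]_d) (c' : 'I_k -> 'rV[R]_d) :
  (0 < k)%N -> injective c' -> opt_kmeans k p <= kmeans_cost p c'.
Proof.
move=> kp ic; rewrite /opt_kmeans; apply: ge_inf; last by exists c'.
by exists 0 => _ [x _ <-]; apply: kmeans_ge0.
Qed.


Lemma exists_inj (c0 c' : 'I_k -> 'rV[R]_d) : injective c0 ->
  exists c'' : 'I_k -> 'rV[R]_d, injective c'' /\ forall m, exists m'', c'' m'' = c' m.
Proof.
move=> ic0.
case: (leqP k 1) => hk.
  exists c'; split; last by move=> m; exists m.
  move=> a b _; apply: ord_inj; have := ltn_ord a; have := ltn_ord b; lia.
have dpos : (0 < d)%N.
  case: (posnP d) => [d0|//].
  have := ic0 (Ordinal (ltnW hk)) (Ordinal hk).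
  have -> : c0 (Ordinal (ltnW hk)) = c0 (Ordinal hk).
    by apply/matrixP => i j; have := ltn_ord j; rewrite {2}d0.
  by move=> /(_ erefl) /(congr1 val).
pose l0 := Ordinal dpos.
pose first (j : 'I_k) := [forall m : 'I_k, (m < j)%N ==> (c' m != c' j)].
pose M := \sum_(m < k) `|c' m ord0 l0|.
have leM m : c' m ord0 l0 <= M.
  apply: le_trans (ler_norm _) _.
  rewrite /M (bigD1 m) //= lerDl; apply: sumr_ge0 => *; apply: normr_ge0.
have neq m (j : 'I_k) : c' m <> const_mx (M + 1 + (j : nat)%:R).
  move=> /matrixP /(_ ord0 l0); rewrite mxE => e.
  have := leM m; rewrite e; have : (0 : R) <= (j : nat)%:R by apply: ler0n.
  move=> h1 h2; lra.
exists (fun j => if first j then c' j else const_mx (M + 1 + (j : nat)%:R)).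
split.
  move=> a b /=.
  case fa: (first a); case fb: (first b).
  - move=> e; case: (ltngtP a b) => h; last by apply/val_inj.
      by move/forallP: fb => /(_ a); rewrite h e eqxx.
    by move/forallP: fa => /(_ b); rewrite h e eqxx.
  - by move=> e; case: (neq a b).
  - by move=> e; case: (neq b a).
  - move=> /matrixP /(_ ord0 l0); rewrite !mxE => e.
    apply/val_inj/eqP; rewrite -(@eqr_nat R); apply/eqP; lra.
move=> m.
have [j [/eqP hj hmin]] := @fin_argmin _ (fun j => c' j == c' m) m (fun j => (j : nat)%:R) (eqxx _).
exists j.
have -> : first j.
  apply/forallP => m0; apply/implyP => h; apply/eqP => e.
  have := hmin m0; rewrite e hj eqxx => /(_ isT); rewrite ler_nat; lia.
by [].
Qed.


Lemma split3 (a b e : 'rV[R]_d) : sqnorm (a - e) <= 2 * sqnorm (a - b) + 2 * sqnorm (b - e).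
Proof. by have := sqnorm_add (a - b) (b - e); rewrite addrA subrK. Qed.

Lemma key (p : 'I_n -> 'rV[R]_d) S (c c' : 'I_k -> 'rV[R]_d) (kp : (0 < k)%N) :
  is_ordered_partition S ->
  exists t : {ffun 'I_k -> 'I_k},
    cluster_cost p S (fun j => c (t j)) <= 6 * cluster_cost p S c' + 4 * kmeans_cost p c.
Proof.
move=> hS.
exists [ffun j => Order.arg_min (Ordinal kp) predT (fun m => sqnorm (c' j - c m))].
rewrite /cluster_cost /kmeans_cost.
set x := n%:R^-1.
have -> : forall A B : R, 6 * (x * A) + 4 * (x * B) = x * (6 * A + 4 * B) by move=> A B; ring.
apply: ler_wpM2l; first by rewrite invr_ge0 ler0n.
rewrite -(partition_sum _ _ hS) mulr_sumr [X in _ + X]mulr_sumr -big_split /=.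
apply: ler_sum => j _.
rewrite mulr_sumr [X in _ + X]mulr_sumr -big_split /=.
apply: ler_sum => i _.
rewrite ffunE.
case: (@arg_minP _ R _ (Ordinal kp) predT (fun m => sqnorm (c' j - c m)) isT) => t _ ht.
have [m [-> hm]] := inf_fin (fun m => sqnorm (p i - c m)) kp.
have h1 := split3 (p i) (c' j) (c t).
have h2 : sqnorm (c' j - c t) <= sqnorm (c' j - c m) by apply: ht.
have h3 := split3 (c' j) (p i) (c m).
rewrite (sqnormB_sym (c' j) (p i)) in h3.
lra.
Qed.

End Helpers.

Lemma letr {R : realType} {x y z : R} : x <= y -> y <= z -> x <= z.
Proof. exact: le_trans. Qed.

Theorem theorem2 (R : realType) (d n k : nat) (p : 'I_n -> 'rV[R]_d)
  (F : {set {ffun 'I_k -> {set 'I_n}}}) (lam : R) (c : 'I_k -> 'rV[R]_d) :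
  (0 < k)%N -> is_constraint F -> 1 <= lam -> is_approx_solution lam p c ->
  exists q : 'I_k -> 'rV[R]_d,
    (forall j : 'I_k, exists m : 'I_k, q j = c m) /\
    exists2 S, S \in F &
      cluster_cost p S q <= (18 * lam + 16) * delta2_opt p F.
Proof.
move=> kp [Fne FP] lam1 [ic capx].
case/set0Pn: Fne => S0 S0F.
have dne : nonempty [set x | exists S c', S \in F /\ x = cluster_cost p S c'].
  by exists (cluster_cost p S0 c); exists S0, c.
have d0 : 0 <= delta2_opt p F.
  apply: lb_le_inf => // _ [S [c' [SF ->]]].
  suff h : (0:R) <= cluster_cost p S c' by [].
  apply: (letr (kmeans_ge0 _ _ _ _ p c' kp)).

  exact: (kmeans_le_cluster _ _ _ _ p S c' kp (FP S SF)).
have od : opt_kmeans k p <= delta2_opt p F.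
  apply: lb_le_inf => // _ [S [c' [SF ->]]].
  suff h : opt_kmeans k p <= cluster_cost p S c' by [].
  have [c'' [ic'' hc'']] := exists_inj _ _ _ c c' ic.
  apply: (letr (opt_le _ _ _ _ p _ kp ic'')).
  apply: (letr (kmeans_mono _ _ _ _ p _ _ kp hc'')).
  exact: (kmeans_le_cluster _ _ _ _ p S c' kp (FP S SF)).
have kc : kmeans_cost p c <= lam * delta2_opt p F.
  apply: (letr capx); apply: ler_wpM2l => //; lra.
pose T := ({ffun 'I_k -> {set 'I_n}} * {ffun 'I_k -> 'I_k})%type.
have [u [uF hu]] := @fin_argmin R T (fun u : T => u.1 \in F) (S0, [ffun=> Ordinal kp])
  (fun u : T => cluster_cost p u.1 (fun j => c (u.2 j))) S0F.
exists (fun j => c (u.2 j)); split; first by move=> j; exists (u.2 j).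
exists u.1 => //.
set g := cluster_cost _ _ _.
have : (g - 4 * lam * delta2_opt p F) / 6 <= delta2_opt p F.
  apply: lb_le_inf => // _ [S [c' [SF ->]]].
  suff h : (g - 4 * lam * delta2_opt p F) / 6 <= cluster_cost p S c' by [].
  have [t ht] := key _ _ _ _ p S c c' kp (FP S SF).
  have := hu (S, t) SF; rewrite /= -/g => hg.
  lra.
move=> h; nra.
Qed.
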